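(* Let $\gamma_{ab}$, $h_{ab}$ be real symmetric invertible $2\times2$ matrices with $a_1=\gamma_{ab}h^{ba}$, $a_2=\gamma_{ab}h^{bc}\gamma_{cd}h^{da}$, and $\gamma=|\det\gamma_{ab}|$. (i) (Diffeomorphism-invariant case.) Let $\mathcal{L}=\sqrt{\gamma}\,f(a_1,a_2)$ with $f$ continuously differentiable. If $\partial\mathcal{L}/\partial h^{ij}=0$ and $\partial f/\partial a_1\neq0$, then $h_{ab}=\phi\gamma_{ab}$ where $\phi$ is a root of the $\gamma$-independent equation $$\phi=-2\,\frac{\partial f/\partial a_2}{\partial f/\partial a_1}\Bigg|_{a_1=2\phi^{-1},\ a_2=2\phi^{-2}},$$ and the Lagrangian evaluates to $\mathcal{L}=c\sqrt{\gamma}$ with $c=f(2\phi^{-1},2\phi^{-2})$. (ii) (Diffeomorphism–Weyl-invariant case.) Let $\mathcal{L}=\sqrt{\gamma}\,f(a_2/a_1^2)$ with $f$ continuously differentiable. Then for every nonzero real $\phi$, $h_{ab}=\phi\gamma_{ab}$ satisfies $\partial\mathcal{L}/\partial h^{ij}=0$, and at any such $h$ the Lagrangian equals $f(\tfrac12)\sqrt{\gamma}$. Moreover, if $a_1\neq0$ and $f'(a_2/a_1^2)\neq0$, every solution of $\partial\mathcal{L}/\partial h^{ij}=0$ is of the form $h_{ab}=\phi\gamma_{ab}$ with $\phi\neq0$.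
   Context: $h^{ab}$ denotes the inverse of $h_{ab}$; derivatives with respect to $h^{ij}$ are taken with $\gamma_{ab}$ fixed, using $\partial a_1/\partial h^{ij}=\gamma_{ji}$ and $\partial a_2/\partial h^{ij}=2\gamma_{ja}h^{ab}\gamma_{bi}$. *)

(* Defs.v *)
From HB Require Import structures.
From mathcomp Require Import all_boot all_order all_algebra.
From mathcomp Require Import all_classical all_reals all_analysis.
Set Implicit Arguments. Unset Strict Implicit. Unset Printing Implicit Defensive.
Import Order.TTheory GRing.Theory Num.Theory.
Import numFieldNormedType.Exports.
Local Open Scope ring_scope.

Section Defs.
Variable R : realType.

Definition sym2 (A : 'M[R]_2) : Prop := A^T = A.

(* a_1 = gamma_{ab} h^{ba},  with Hi = (h^{ab}) the inverse of h *)
Definition a1 (g Hi : 'M[R]_2) : R := \tr (g *m Hi).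
Definition a2 (g Hi : 'M[R]_2) : R := \tr (g *m Hi *m g *m Hi).
Definition gam (g : 'M[R]_2) : R := `|\det g|.

Definition Lag1 (f : R -> R -> R) (g Hi : 'M[R]_2) : R :=
  Num.sqrt (gam g) * f (a1 g Hi) (a2 g Hi).

Definition Lag2 (f : R -> R) (g Hi : 'M[R]_2) : R :=
  Num.sqrt (gam g) * f (a2 g Hi / (a1 g Hi) ^+ 2).

(* partial derivative dL/dh^{ij}, with gamma fixed and the four entries
   h^{ab} treated as independent variables *)
Definition dL_dhinv (L : 'M[R]_2 -> R) (Hi : 'M[R]_2) (i j : 'I_2) : R :=
  derive1 (fun t : R => L (Hi + t *: delta_mx i j)) 0.

Definition d1 (f : R -> R -> R) (x y : R) : R := derive1 (fun t => f t y) x.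
Definition d2 (f : R -> R -> R) (x y : R) : R := derive1 (fun t => f x t) y.

Definition C1_2 (f : R -> R -> R) : Prop :=
  (forall x y, derivable (fun t => f t y) x 1 /\ derivable (fun t => f x t) y 1) /\
  continuous (fun p : R * R => d1 f p.1 p.2) /\
  continuous (fun p : R * R => d2 f p.1 p.2).

Definition C1_1 (f : R -> R) : Prop :=
  (forall x, derivable f x 1) /\ continuous (derive1 f).

End Defs.

(* Main.v *)
Require Import Defs.
From HB Require Import structures.
From mathcomp Require Import all_boot all_order all_algebra.
From mathcomp Require Import all_classical all_reals all_analysis.
Import Order.TTheory GRing.Theory Num.Theory.
Import numFieldNormedType.Exports.
From mathcomp Require Import ring lra.
Set Implicit Arguments. Unset Strict Implicit. Unset Printing Implicit Defensive.
Local Open Scope ring_scope.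
Local Open Scope classical_set_scope.



Lemma mvt_bound (R : realType) (G : R -> R) (a b eps : R) :
  (forall x, derivable G x 1) ->
  (forall c, `|a - c| <= `|a - b| -> `|G^`() c| <= eps) ->
  `|G b - G a| <= eps * `|b - a|.
Proof.
move=> dG hb.
have dG' : forall x : R, is_derive x (1:R) G (G^`() x).
  by move=> x; rewrite derive1E; exact: derivableP.
have cG : forall a' b', {within `[a', b'], continuous G}.
  move=> a' b'; apply: derivable_within_continuous => x _; exact: dG.
case: (leP a b) => ab.
  have [c cab ->] := MVT_segment ab (fun x _ => dG' x) (cG a b).
  rewrite normrM ler_wpM2r //; apply: hb.
  move: cab; rewrite in_itv /= => /andP [h1 h2].
  rewrite !ler0_norm ?subr_le0 //; lra.
have ba := ltW ab.
have [c cab E] := MVT_segment ba (fun x _ => dG' x) (cG b a).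
rewrite distrC E distrC normrM ler_wpM2r //; apply: hb.
move: cab; rewrite in_itv /= => /andP [h1 h2].
rewrite !ger0_norm ?subr_ge0 //; lra.
Qed.

Lemma cvg_is_derive (R : realType) (F : R -> R) (L : R) :
  (fun h => h^-1 * (F h - F 0)) @ 0^' --> L -> is_derive (0:R) 1 F L.
Proof.
move=> H.
have E : (fun h : R => h^-1 *: ((F \o shift 0) (h *: 1) - F 0)) = (fun h => h^-1 * (F h - F 0)).
  apply/funext => h /=. rewrite addr0 [_ *: 1]mulr1. done.
apply: DeriveDef; rewrite /derivable /derive E; first exact: cvgP H.
exact: cvg_lim.
Qed.

Lemma is_derive_cvg (R : realType) (F : R -> R) (L : R) :
  is_derive (0:R) 1 F L -> (fun h => h^-1 * (F h - F 0)) @ 0^' --> L.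
Proof.
move=> [H1 H2].
have E : (fun h : R => h^-1 *: ((F \o shift 0) (h *: 1) - F 0)) = (fun h => h^-1 * (F h - F 0)).
  apply/funext => h /=. rewrite addr0 [_ *: 1]mulr1. done.
move: H1 H2; rewrite /derivable /derive E => H1 <-.
exact: H1.
Qed.

Lemma cont2_delta (R : realType) (F : R -> R -> R) (x0 y0 eps : R) :
  continuous (fun p : R * R => F p.1 p.2) -> 0 < eps ->
  exists2 d : R, 0 < d & forall x y, `|x0 - x| < d -> `|y0 - y| < d ->
     `|F x0 y0 - F x y| < eps.
Proof.
move=> cF e0.
have := cF (x0, y0).
move=> /cvgrPdist_lt /(_ _ e0) /nbhs_ballP [d /= d0 Hd].
exists d => // x y hx hy.
apply: (Hd (x, y)).
split; rewrite -ball_normE /=; done.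
Qed.

Lemma is_derive_cont0 (R : realType) (u : R -> R) du :
  is_derive (0:R) 1 u du -> u x @[x --> 0^'] --> u 0.
Proof.
move=> [H _]; apply/continuous_withinNx.
apply: differentiable_continuous; exact/derivable1_diffP.
Qed.

Lemma derG (R : realType) (f : R -> R -> R) (y k : R) :
  (forall x, derivable (fun t => f t y) x 1) ->
  forall x, derivable (fun s => f s y - s * k) x 1 /\
     (fun s => f s y - s * k)^`() x = derive1 (fun t => f t y) x - k.
Proof.
move=> H x.
have h1 : derivable (fun s : R => s * k) x 1.
  apply: derivableM; [exact: derivable_id | exact: derivable_cst].
split.
  exact: (derivableB (H x) h1).
rewrite derive1E (deriveB (H x) h1) -derive1E; congr (_ - _).
rewrite deriveMr; last exact: derivable_id.
by rewrite derive_id mulr1.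
Qed.

Lemma chain2 (R : realType) (f : R -> R -> R) (u v : R -> R) (du dv : R) :
  C1_2 f -> is_derive (0:R) 1 u du -> is_derive (0:R) 1 v dv ->
  is_derive (0:R) 1 (fun t => f (u t) (v t))
     (du * d1 f (u 0) (v 0) + dv * d2 f (u 0) (v 0)).
Proof.
move=> [fd [c1 c2]] hu hv.
apply: cvg_is_derive.
set u0 := u 0; set v0 := v 0; set f1 := d1 f u0 v0; set f2 := d2 f u0 v0.
have Qu := is_derive_cvg hu.
have F2d : is_derive (0:R) 1 (fun t => f u0 (v t)) (f2 * dv).
  have dv0 : differentiable v 0 by apply/derivable1_diffP; case: hv.
  have dg : differentiable (fun y => f u0 y) (v 0).
    by apply/derivable1_diffP; case: (fd u0 (v 0)).
  have dc : derivable ((fun y => f u0 y) \o v) 0 1.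
    by apply/derivable1_diffP; exact: differentiable_comp.
  apply: DeriveDef; first exact: dc.
  rewrite -derive1E derive1_comp; last 2 first.
  - by apply/derivable1_diffP.
  - by apply/derivable1_diffP.
  have [_ dvv] := hv.
  by rewrite [derive1 v _]derive1E dvv mulrC.
have Q2 := is_derive_cvg F2d.
pose E h := f (u h) (v h) - f u0 (v h) - (u h - u0) * f1.
have Ec : (fun h => h^-1 * E h) @ 0^' --> (0:R).
  apply/cvgr0Pnorm_lt => eps e0.
  pose M := `|du| + 1.
  have M0 : 0 < M by rewrite /M ltr_wpDl.
  pose e' := eps / (2 * M).
  have e'0 : 0 < e' by rewrite /e' divr_gt0 // mulr_gt0.
  have [d d0 Hd] := cont2_delta u0 v0 c1 e'0.
  have nQ : \forall h \near 0^', `|h^-1 * (u h - u 0)| < M.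
    move: Qu => /cvgrPdist_lt /(_ 1 ltr01); apply: filterS => h hh.
    rewrite /M; have := lerB_dist (h^-1 * (u h - u 0)) du.
    move: hh; rewrite distrC; lra.
  have nU : \forall h \near 0^', `|u0 - u h| < d.
    by move: (is_derive_cont0 hu) => /cvgrPdist_lt /(_ d d0).
  have nV : \forall h \near 0^', `|v0 - v h| < d.
    by move: (is_derive_cont0 hv) => /cvgrPdist_lt /(_ d d0).
  near=> h.
  have hQ : `|h^-1 * (u h - u 0)| < M by near: h.
  have hU : `|u0 - u h| < d by near: h.
  have hV : `|v0 - v h| < d by near: h.
  have key : `|E h| <= e' * `|u h - u0|.
    have := @mvt_bound R (fun s => f s (v h) - s * f1) u0 (u h) e'.
    have dG := derG f1 (fun x => (fd x (v h)).1).
    rewrite /E.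
    have -> : f (u h) (v h) - f u0 (v h) - (u h - u0) * f1 =
       (f (u h) (v h) - u h * f1) - (f u0 (v h) - u0 * f1) by ring.
    apply.
      by move=> x; case: (dG x).
    move=> c hc; case: (dG c) => _ ->.
    rewrite distrC; apply: ltW; apply: Hd => //; lra.
  rewrite normrM.
  apply: (le_lt_trans (ler_wpM2l (normr_ge0 _) key)).
  rewrite mulrCA -normrM.
  apply: (le_lt_trans (ler_wpM2l (ltW e'0) (ltW hQ))).
  rewrite /e'.
  have -> : eps / (2 * M) * M = eps / 2.
    by field; rewrite gt_eqF.
  lra.
have Esum : (fun h => h^-1 * (f (u h) (v h) - f (u 0) (v 0))) =
  (fun h => (h^-1 * (u h - u 0)) * f1 + h^-1 * E h + h^-1 * (f u0 (v h) - f u0 (v 0))).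
  by apply/funext => h; rewrite /E /u0 /v0; ring.
rewrite Esum.
have -> : du * f1 + dv * f2 = du * f1 + 0 + f2 * dv by ring.
apply: cvgD; last exact: Q2.
apply: cvgD; last exact: Ec.
exact: cvgMl.
Unshelve. all: by end_near.
Qed.

Lemma quad_derive (R : realType) (a b c : R) :
  is_derive (0:R) 1 (fun t => a + t * b + t ^+ 2 * c) b.
Proof.
apply: cvg_is_derive.
have e : {near 0^', (fun h : R => b + h * c) =1
   (fun h => h^-1 * ((a + h * b + h ^+ 2 * c) - (a + 0 * b + 0 ^+ 2 * c)))}.
  near=> h.
  have h0 : h != 0 by near: h; exact: nbhs_dnbhs_neq.
  by rewrite /=; field.
apply: cvg_trans (near_eq_cvg e) _.
have cc : continuous (fun h : R => b + h * c).
  move=> x; apply: cvgD; first exact: cvg_cst.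
  apply: cvgM; [exact: cvg_id | exact: cvg_cst].
have := cc 0; move=> /continuous_withinNx.
by rewrite mul0r addr0.
Unshelve. all: by end_near.
Qed.

Lemma quot_derive (R : realType) (u v : R -> R) du dv :
  is_derive (0:R) 1 u du -> is_derive (0:R) 1 v dv -> u 0 != 0 ->
  is_derive (0:R) 1 (fun t => v t / (u t) ^+ 2)
    (dv / (u 0) ^+ 2 - 2 * v 0 * du / (u 0) ^+ 3).
Proof.
move=> [hu hu'] [hv hv'] u0.
have E : (fun t => v t / (u t) ^+ 2) = v * (fun y => ((u ^+ 2) y)^-1).
  by apply/funext => t.
have u2 : (u ^+ 2) 0 != 0.
  by change (u 0 ^+ 2 != 0); rewrite expf_neq0.
have du2 : derivable (u ^+ 2) 0 1 by exact: derivableX.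
suff H : is_derive (0:R) 1 (v * (fun y => ((u ^+ 2) y)^-1))
    (dv / (u 0) ^+ 2 - 2 * v 0 * du / (u 0) ^+ 3) by exact: H.
apply: DeriveDef.
  apply: derivableM => //; exact: derivableV.
rewrite deriveM //; last exact: derivableV.
rewrite deriveV // deriveX // hu' hv' /=.
change ((u ^+ 2) 0) with (u 0 ^+ 2).
rewrite /GRing.scale /=.
by field.
Qed.

Lemma ow0 : widen_ord (leqnSn 1) (@ord_max 0) = (ord0 : 'I_2).
Proof. exact: val_inj. Qed.
Lemma oo0 (h : (0 < 2)%N) : Ordinal h = ord0 :> 'I_2.
Proof. exact: val_inj. Qed.
Lemma oo1 (h : (1 < 2)%N) : Ordinal h = ord_max :> 'I_2.
Proof. exact: val_inj. Qed.

Lemma a1_line (R : realType) (g H : 'M[R]_2) i j t :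
  a1 g (H + t *: delta_mx i j) = a1 g H + t * g j i.
Proof.
rewrite /a1 /mxtrace !big_ord_recr !big_ord0 /= !mxE !big_ord_recr !big_ord0 /= !mxE.
by case: i => [[|[|//]] hi]; case: j => [[|[|//]] hj]; rewrite /= ?eqE /= ?ow0 ?oo0 ?oo1; ring.
Qed.

Lemma a2_line (R : realType) (g H : 'M[R]_2) i j t :
  a2 g (H + t *: delta_mx i j) = a2 g H + t * (2 * (g *m H *m g) j i) + t ^+ 2 * (g j i) ^+ 2.
Proof.
rewrite /a2 /mxtrace !big_ord_recr !big_ord0 /= !mxE !big_ord_recr !big_ord0 /= !mxE ?big_ord_recr ?big_ord0 /= ?mxE ?big_ord_recr ?big_ord0 /= ?mxE.
by case: i => [[|[|//]] hi]; case: j => [[|[|//]] hj]; rewrite /= ?eqE /= ?ow0 ?oo0 ?oo1; ring.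
Qed.

Lemma dLag1 (R : realType) (f : R -> R -> R) (g H : 'M[R]_2) i j : C1_2 f ->
  dL_dhinv (Lag1 f g) H i j = Num.sqrt (gam g) *
   (g j i * d1 f (a1 g H) (a2 g H) + (2 * (g *m H *m g) j i) * d2 f (a1 g H) (a2 g H)).
Proof.
move=> Cf; rewrite /dL_dhinv /Lag1.
pose A1 := a1 g H; pose A2 := a2 g H; pose B := 2 * (g *m H *m g) j i; pose c := g j i.
have -> : (fun t => Num.sqrt (gam g) * f (a1 g (H + t *: delta_mx i j)) (a2 g (H + t *: delta_mx i j)))
   = (fun t => Num.sqrt (gam g) * f (A1 + t * c + t ^+ 2 * 0) (A2 + t * B + t ^+ 2 * c ^+ 2)).
  by apply/funext => t; rewrite a1_line a2_line mulr0 addr0.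
have D := chain2 Cf (quad_derive A1 c 0) (quad_derive A2 B (c ^+ 2)).
rewrite derive1Ml; last by case: D.
rewrite derive1E; have [_ ->] := D.
by rewrite /= !mul0r expr0n /= !mul0r !addr0.
Qed.

Lemma dLag2 (R : realType) (f : R -> R) (g H : 'M[R]_2) i j : C1_1 f ->
  a1 g H != 0 ->
  dL_dhinv (Lag2 f g) H i j = Num.sqrt (gam g) *
   (derive1 f (a2 g H / a1 g H ^+ 2) *
    ((2 * (g *m H *m g) j i) / a1 g H ^+ 2 - 2 * a2 g H * g j i / a1 g H ^+ 3)).
Proof.
move=> [fd _] a0; rewrite /dL_dhinv /Lag2.
pose A1 := a1 g H; pose A2 := a2 g H; pose B := 2 * (g *m H *m g) j i; pose c := g j i.
pose u := fun t : R => A1 + t * c + t ^+ 2 * 0.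
pose v := fun t : R => A2 + t * B + t ^+ 2 * c ^+ 2.
have -> : (fun t => Num.sqrt (gam g) * f (a2 g (H + t *: delta_mx i j) / a1 g (H + t *: delta_mx i j) ^+ 2))
   = (fun t => Num.sqrt (gam g) * (f \o (fun t => v t / u t ^+ 2)) t).
  by apply/funext => t; rewrite /= /u /v a1_line a2_line mulr0 addr0.
have u0 : u 0 = A1 by rewrite /u /=; ring.
have v0 : v 0 = A2 by rewrite /v /=; ring.
have Q : is_derive (0:R) 1 (fun t => v t / u t ^+ 2) (B / A1 ^+ 2 - 2 * A2 * c / A1 ^+ 3).
  have := @quot_derive R u v c B (quad_derive A1 c 0) (quad_derive A2 B (c ^+ 2)).
  by rewrite u0 v0; apply.
have dQ : derivable (fun t => v t / u t ^+ 2) 0 1 by case: Q.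
have dc : derivable (f \o (fun t => v t / u t ^+ 2)) 0 1.
  apply/derivable1_diffP; apply: differentiable_comp.
    exact/derivable1_diffP.
  by have /derivable1_diffP := fd (v 0 / u 0 ^+ 2).
rewrite derive1Ml //.
rewrite derive1_comp; last 2 first.
- exact: dQ.
- exact: (fd (v 0 / u 0 ^+ 2)).
congr (_ * (_ * _)).
  by rewrite /= u0 v0.
rewrite derive1E; have [_ ->] := Q.
by [].
Qed.

Lemma solveH (R : realType) (g H : 'M[R]_2) (c : R) :
  g \in unitmx -> g *m H *m g = c *: g -> H = c *: invmx g.
Proof.
move=> ug E.
have : invmx g *m (g *m H *m g) *m invmx g = H.
  by rewrite !mulmxA mulVmx // mul1mx -mulmxA mulmxV // mulmx1.
by rewrite E -scalemxAr -scalemxAl mulVmx // mul1mx => <-.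
Qed.

Lemma gHg (R : realType) (g : 'M[R]_2) (c : R) :
  g \in unitmx -> g *m (c *: invmx g) *m g = c *: g.
Proof. by move=> ug; rewrite -scalemxAr mulmxV // -scalemxAl mul1mx. Qed.

Lemma tr_a1 (R : realType) (g : 'M[R]_2) (c : R) :
  g \in unitmx -> a1 g (c *: invmx g) = c * 2.
Proof. by move=> ug; rewrite /a1 -scalemxAr mulmxV // mxtraceZ mxtrace1. Qed.

Lemma tr_a2 (R : realType) (g : 'M[R]_2) (c : R) :
  g \in unitmx -> a2 g (c *: invmx g) = c ^+ 2 * 2.
Proof.
move=> ug; rewrite /a2 gHg // -scalemxAl -scalemxAr mulmxV // !mxtraceZ mxtrace1 mulrA.
by rewrite expr2.
Qed.

Lemma invZ (R : realType) (g : 'M[R]_2) (c : R) :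
  g \in unitmx -> c != 0 -> invmx (c *: invmx g) = c^-1 *: g.
Proof.
move=> ug cn; rewrite invmxZ ?invmxK //.
by rewrite unitmxZ ?unitfE // unitmx_inv.
Qed.

Lemma sqrt_gam_neq0 (R : realType) (g : 'M[R]_2) :
  g \in unitmx -> Num.sqrt (gam g) != 0.
Proof.
by move=> ug; rewrite gt_eqF // sqrtr_gt0 /gam normr_gt0 -unitfE -unitmxE.
Qed.

Lemma solve_lin (R : realType) (x y p q : R) :
  q != 0 -> y * p + 2 * x * q = 0 -> x = - (p / (2 * q)) * y.
Proof.
move=> qn e.
have e' : 2 * x * q = - (y * p).
  by apply/eqP; rewrite -addr_eq0 addrC e.
have -> : x = (2 * x * q) / (2 * q) by field.
by rewrite e'; field.
Qed.

Lemma solve_lin2 (R : realType) (x y A1 A2 : R) :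
  A1 != 0 -> 2 * x / A1 ^+ 2 - 2 * A2 * y / A1 ^+ 3 = 0 -> x = (A2 / A1) * y.
Proof.
move=> an e.
have e' : 2 * x / A1 ^+ 2 = 2 * A2 * y / A1 ^+ 3.
  by apply/eqP; rewrite -subr_eq0 e.
have -> : x = (2 * x / A1 ^+ 2) * A1 ^+ 2 / 2 by field.
by rewrite e'; field.
Qed.

Unset Implicit Arguments.
Local Close Scope classical_set_scope.

Theorem mainTheorem8 (R : realType) :
  (* (i) diffeomorphism-invariant case *)
  (forall (f : R -> R -> R) (g h : 'M[R]_2),
     C1_2 f ->
     sym2 g -> g \in unitmx -> sym2 h -> h \in unitmx ->
     (forall i j : 'I_2, dL_dhinv (Lag1 f g) (invmx h) i j = 0) ->
     d1 f (a1 g (invmx h)) (a2 g (invmx h)) != 0 ->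
     exists phi : R,
       [/\ phi != 0, h = phi *: g,
           phi = - 2 * d2 f (2 / phi) (2 / phi ^+ 2) / d1 f (2 / phi) (2 / phi ^+ 2)
         & Lag1 f g (invmx h) = f (2 / phi) (2 / phi ^+ 2) * Num.sqrt (gam g)]) /\
  (* (ii) diffeomorphism-Weyl-invariant case *)
  (forall (f : R -> R) (g : 'M[R]_2),
     C1_1 f -> sym2 g -> g \in unitmx ->
     (forall phi : R, phi != 0 ->
        (forall i j : 'I_2, dL_dhinv (Lag2 f g) (invmx (phi *: g)) i j = 0) /\
        Lag2 f g (invmx (phi *: g)) = f (2^-1) * Num.sqrt (gam g)) /\
     (forall h : 'M[R]_2, sym2 h -> h \in unitmx ->
        a1 g (invmx h) != 0 ->
        derive1 f (a2 g (invmx h) / (a1 g (invmx h)) ^+ 2) != 0 ->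
        (forall i j : 'I_2, dL_dhinv (Lag2 f g) (invmx h) i j = 0) ->
        exists phi : R, phi != 0 /\ h = phi *: g)).
Proof.

Proof.
split.
  move=> f g h Cf _ ug _ uh hyp hd1.
  set H := invmx h in hyp hd1 *.
  set A1 := a1 g H in hd1 *; set A2 := a2 g H in hd1 *.
  set f1 := d1 f A1 A2 in hd1 *; pose f2 := d2 f A1 A2.
  have sq := sqrt_gam_neq0 ug.
  have eq i j : g j i * f1 + 2 * (g *m H *m g) j i * f2 = 0.
    have := hyp i j; rewrite dLag1 // => /eqP.
    by rewrite mulf_eq0 (negbTE sq) /= => /eqP.
  have f2n : f2 != 0.
    apply/negP => /eqP f20.
    have g0 : g = 0.
      apply/matrixP => a b; rewrite mxE.
      have := eq b a; rewrite f20 mulr0 addr0 => /eqP.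
      by rewrite mulf_eq0 (negbTE hd1) orbF => /eqP.
    by move: ug; rewrite g0 unitmxE det0 unitr0.
  pose c := - (f1 / (2 * f2)).
  have M : g *m H *m g = c *: g.
    apply/matrixP => a b; rewrite [RHS]mxE.
    exact: solve_lin (eq b a).
  have HE : H = c *: invmx g := solveH ug M.
  have cn : c != 0.
    by rewrite /c oppr_eq0 mulf_neq0 // invr_neq0 // mulf_neq0.
  have hE : h = c^-1 *: g.
    by rewrite -[h]invmxK -/H HE invZ.
  have e1 : 2 / c^-1 = A1 by rewrite /A1 HE tr_a1 // invrK mulrC.
  have e2 : 2 / c^-1 ^+ 2 = A2 by rewrite /A2 HE tr_a2 //; field.
  exists c^-1; split.
  - by rewrite invr_neq0.
  - exact: hE.
  - rewrite e1 e2 -/f1 -/f2 /c; field.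
    by rewrite f2n hd1.
  - by rewrite e1 e2 /Lag1 mulrC.
move=> f g Cf _ ug; split.
  move=> phi pn.
  have Hu : invmx (phi *: g) = phi^-1 *: invmx g.
    by rewrite invmxZ // unitmxZ // unitfE.
  have a1n : a1 g (invmx (phi *: g)) != 0.
    by rewrite Hu tr_a1 // mulf_neq0 // invr_neq0.
  split.
    move=> i j; rewrite dLag2 //.
    rewrite Hu gHg // tr_a1 // tr_a2 // mxE.
    apply/eqP; rewrite !mulf_eq0; apply/orP; right; apply/orP; right; apply/eqP.
    by field.
  rewrite /Lag2 Hu tr_a1 // tr_a2 // mulrC; congr (f _ * _).
  by field.
move=> h _ uh a0 fd hyp.
set H := invmx h in a0 fd hyp *.
set A1 := a1 g H in a0 fd hyp *; set A2 := a2 g H in fd hyp *.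
have sq := sqrt_gam_neq0 ug.
have eq i j : 2 * (g *m H *m g) j i / A1 ^+ 2 - 2 * A2 * g j i / A1 ^+ 3 = 0.
  have := hyp i j; rewrite dLag2 // => /eqP.
  rewrite mulf_eq0 (negbTE sq) /= mulf_eq0 (negbTE fd) /=.
  by move=> /eqP.
pose c := A2 / A1.
have M : g *m H *m g = c *: g.
  apply/matrixP => a b; rewrite [RHS]mxE.
  exact: solve_lin2 (eq b a).
have HE : H = c *: invmx g := solveH ug M.
have cn : c != 0.
  apply/negP => /eqP c0.
  have : H \in unitmx by rewrite unitmx_inv.
  by rewrite HE c0 scale0r unitmxE det0 unitr0.
exists c^-1; split; first by rewrite invr_neq0.
by rewrite -[h]invmxK -/H HE invZ.
Qed.
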